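(* Let $(X,d)$ be a quasi-tree which is $\delta$-hyperbolic and has bottleneck constant $\Delta\geqslant 0$. Let $x_0\in X$, let $Z\subset X$ be any subset, and let $Y=\bigcup_{z\in Z}[x_0,z]$ be a union of geodesic segments (one chosen geodesic from $x_0$ to each $z\in Z$). Then there exist an $\mathbb{R}$-tree $(T,d^* )$ and a map $f:Y\to T$ such that: (1) for all $z\in Z$, the restriction of $f$ to the geodesic segment $[x_0,z]$ is an isometry; (2) for all $x,y\in Y$, $d(x,y)-2(\Delta+2\delta)\leqslant d^*(f(x),f(y))\leqslant d(x,y)$.
   Context: A quasi-tree is a geodesic metric space quasi-isometric to a simplicial tree. A geodesic metric space is $\delta$-hyperbolic if every geodesic triangle is $\delta$-slim: each point of one side lies within distance $\delta$ of the union of the other two sides. A bottleneck constant of $X$ is a number $\Delta\geqslant0$ such that for every geodesic $[x,y]$ in $X$ and every point $z\in[x,y]$, every path from $x$ to $y$ meets the closed ball $B(z,\Delta)$ (for a quasi-tree such $\Delta$ exists). An $\mathbb{R}$-tree is a metric space in which any two points are joined by a unique topological arc, which is a geodesic. *)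

(* Defs.v *)
From Stdlib Require Import Reals Lra.
Open Scope R_scope.

Definition is_metric {X : Type} (d : X -> X -> R) : Prop :=
  (forall x y, 0 <= d x y) /\
  (forall x y, d x y = 0 <-> x = y) /\
  (forall x y, d x y = d y x) /\
  (forall x y z, d x z <= d x y + d y z).

Definition is_geodesic {X : Type} (d : X -> X -> R) (g : R -> X) (x y : X) : Prop :=
  g 0 = x /\ g (d x y) = y /\
  (forall s t, 0 <= s <= d x y -> 0 <= t <= d x y -> d (g s) (g t) = Rabs (s - t)).

Definition on_geod {X : Type} (d : X -> X -> R) (g : R -> X) (x y p : X) : Prop :=
  exists t, 0 <= t <= d x y /\ p = g t.

Definition geodesic_space {X : Type} (d : X -> X -> R) : Prop :=
  is_metric d /\ forall x y, exists g, is_geodesic d g x y.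

Definition hyperbolic {X : Type} (d : X -> X -> R) (delta : R) : Prop :=
  forall (a b c : X) (g1 g2 g3 : R -> X),
    is_geodesic d g1 a b -> is_geodesic d g2 b c -> is_geodesic d g3 c a ->
    forall p, on_geod d g1 a b p ->
      exists q, (on_geod d g2 b c q \/ on_geod d g3 c a q) /\ d p q <= delta.

Definition path_continuous {X : Type} (d : X -> X -> R) (p : R -> X) : Prop :=
  forall t, 0 <= t <= 1 -> forall eps, 0 < eps -> exists eta, 0 < eta /\
    forall s, 0 <= s <= 1 -> Rabs (s - t) < eta -> d (p s) (p t) < eps.

Definition bottleneck {X : Type} (d : X -> X -> R) (Delta : R) : Prop :=
  0 <= Delta /\
  forall (x y : X) (g : R -> X), is_geodesic d g x y ->
    forall z, on_geod d g x y z ->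
      forall p : R -> X, path_continuous d p -> p 0 = x -> p 1 = y ->
        exists t, 0 <= t <= 1 /\ d (p t) z <= Delta.

Definition walk {V : Type} (adj : V -> V -> Prop) (w : nat -> V) (u v : V) (n : nat) : Prop :=
  w 0%nat = u /\ w n = v /\ (forall i, (i < n)%nat -> adj (w i) (w (S i))).

Definition nonbacktracking {V : Type} (w : nat -> V) (n : nat) : Prop :=
  forall i, (i + 2 <= n)%nat -> w i <> w (i + 2)%nat.

Definition simplicial_tree {V : Type} (adj : V -> V -> Prop) : Prop :=
  (forall u v, adj u v -> adj v u) /\
  (forall u, ~ adj u u) /\
  (forall u v, exists w n, walk adj w u v n) /\
  (forall u w n, (1 <= n)%nat -> walk adj w u u n -> nonbacktracking w n -> False).

Definition gdist {V : Type} (adj : V -> V -> Prop) (u v : V) (n : nat) : Prop :=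
  (exists w, walk adj w u v n) /\ (forall w m, walk adj w u v m -> (n <= m)%nat).

Definition quasi_isometric_to_tree {X V : Type} (d : X -> X -> R) (adj : V -> V -> Prop) : Prop :=
  exists (phi : X -> V) (lam C : R), 1 <= lam /\ 0 <= C /\
    (forall x y n, gdist adj (phi x) (phi y) n ->
        d x y / lam - C <= INR n <= lam * d x y + C) /\
    (forall v, exists x n, gdist adj v (phi x) n /\ INR n <= C).

Definition quasi_tree {X : Type} (d : X -> X -> R) : Prop :=
  geodesic_space d /\
  exists (V : Type) (adj : V -> V -> Prop), simplicial_tree adj /\ quasi_isometric_to_tree d adj.

Definition is_arc {T : Type} (d : T -> T -> R) (p : R -> T) (a b : T) : Prop :=
  path_continuous d p /\ p 0 = a /\ p 1 = b /\
  (forall s t, 0 <= s <= 1 -> 0 <= t <= 1 -> p s = p t -> s = t).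

Definition R_tree {T : Type} (d : T -> T -> R) : Prop :=
  is_metric d /\
  forall a b : T, exists g, is_geodesic d g a b /\
    forall p, is_arc d p a b ->
      forall q, (exists s, 0 <= s <= 1 /\ q = p s) <-> on_geod d g a b q.

(* Main.v *)
Require Import Defs.
From Stdlib Require Import Reals Lra Classical ClassicalEpsilon FunctionalExtensionality PropExtensionality ProofIrrelevance.
Open Scope R_scope.

Record kit (T : Type) := Kit {
  kh : T -> R; km : T -> T -> R; kanc : T -> R -> T;
  km_sym : forall x y, km x y = km y x;
  km_diag : forall x, km x x = kh x;
  km_nonneg : forall x y, 0 <= km x y;
  km_le : forall x y, km x y <= kh x;
  km_ultra : forall x y z, Rmin (km x y) (km y z) <= km x z;
  km_id : forall x y, km x y = kh x -> kh x = kh y -> x = y;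
  kanc_h : forall x t, 0 <= t <= kh x -> kh (kanc x t) = t;
  kanc_m : forall x t y, 0 <= t <= kh x -> km (kanc x t) y = Rmin t (km x y) }.

Arguments kh {T} k _.
Arguments km {T} k _ _.
Arguments kanc {T} k _ _.
Arguments km_sym {T} k _ _.
Arguments km_diag {T} k _.
Arguments km_nonneg {T} k _ _.
Arguments km_le {T} k _ _.
Arguments km_ultra {T} k _ _ _.
Arguments km_id {T} k _ _.
Arguments kanc_h {T} k _ _.
Arguments kanc_m {T} k _ _ _.

Definition dk {T} (K : kit T) x y := kh K x + kh K y - 2 * km K x y.

Lemma ultra3 {T} (K : kit T) x y z :
  let p := km K x y in let q := km K y z in let r := km K x z in
  (p = q /\ p <= r) \/ (p = r /\ p <= q) \/ (q = r /\ q <= p).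
Proof.
  intros p q r.
  pose proof (km_ultra K x y z) as H1.
  pose proof (km_ultra K y z x) as H2.
  pose proof (km_ultra K z x y) as H3.
  rewrite (km_sym K z x) in H2, H3. rewrite (km_sym K y x) in H2.
  rewrite (km_sym K z y) in H3.
  subst p q r. unfold Rmin in *.
  repeat destruct Rle_dec; lra.
Qed.

Lemma km_le2 {T} (K : kit T) x y : km K x y <= kh K y.
Proof. rewrite km_sym. apply km_le. Qed.

Lemma kh_nonneg {T} (K : kit T) x : 0 <= kh K x.
Proof. rewrite <- km_diag. apply km_nonneg. Qed.

Lemma dk_metric {T} (K : kit T) : is_metric (dk K).
Proof.
  unfold dk; repeat split.
  - intros x y. pose proof (km_le K x y). pose proof (km_le2 K x y). lra.
  - intros H. pose proof (km_le K x y). pose proof (km_le2 K x y).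
    apply (km_id K); lra.
  - intros ->. rewrite km_diag. lra.
  - intros x y. rewrite km_sym. lra.
  - intros x y z.
    pose proof (km_ultra K x y z). pose proof (km_le2 K x y). pose proof (km_le K y z).
    unfold Rmin in *. destruct Rle_dec; lra.
Qed.

Lemma anc_top {T} (K : kit T) x : kanc K x (kh K x) = x.
Proof.
  pose proof (kh_nonneg K x).
  apply (km_id K).
  - rewrite kanc_m by lra. rewrite km_diag, kanc_h by lra. unfold Rmin; destruct Rle_dec; lra.
  - rewrite kanc_h by lra. auto.
Qed.

Definition gk {T} (K : kit T) a b t :=
  if Rle_dec t (kh K a - km K a b) then kanc K a (kh K a - t)
  else kanc K b (t - kh K a + 2 * km K a b).

Lemma gk_spec {T} (K : kit T) a b t : 0 <= t <= dk K a b ->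
  (t <= kh K a - km K a b /\ kh K (gk K a b t) = kh K a - t /\
     forall w, km K (gk K a b t) w = Rmin (kh K a - t) (km K a w)) \/
  (t > kh K a - km K a b /\ kh K (gk K a b t) = t - kh K a + 2 * km K a b /\
     forall w, km K (gk K a b t) w = Rmin (t - kh K a + 2 * km K a b) (km K b w)).
Proof.
  intros Ht. unfold dk in Ht. pose proof (km_le K a b). pose proof (km_le2 K a b).
  pose proof (km_nonneg K a b).
  unfold gk; destruct Rle_dec as [Hc|Hc].
  - left. split; [lra|]. split.
    + apply kanc_h; lra.
    + intros; apply kanc_m; lra.
  - right. split; [lra|]. split.
    + apply kanc_h; lra.
    + intros; apply kanc_m; lra.
Qed.

Lemma gk_geod {T} (K : kit T) a b : is_geodesic (dk K) (gk K a b) a b.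
Proof.
  pose proof (km_le K a b). pose proof (km_le2 K a b). pose proof (km_nonneg K a b).
  split; [|split].
  - unfold gk; destruct Rle_dec; [|lra]. replace (kh K a - 0) with (kh K a) by lra. apply anc_top.
  - unfold gk, dk; destruct Rle_dec.
    + apply (km_id K).
      * rewrite kanc_m by lra. rewrite kanc_h by lra. unfold Rmin; destruct Rle_dec; lra.
      * rewrite kanc_h by lra. lra.
    + replace (kh K a + kh K b - 2 * km K a b - kh K a + 2 * km K a b) with (kh K b) by lra.
      apply anc_top.
  - intros s t Hs Ht.
    pose proof (gk_spec K a b s Hs) as Gs. pose proof (gk_spec K a b t Ht) as Gt.
    unfold dk in *.
    pose proof (km_diag K a) as Da. pose proof (km_diag K b) as Db.
    pose proof (km_sym K a b) as Sab.
    destruct Gs as [[s1 [s2 s3]]|[s1 [s2 s3]]]; destruct Gt as [[t1 [t2 t3]]|[t1 [t2 t3]]];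
      rewrite s2, t2, s3; rewrite (km_sym K _ (gk K a b t)), t3;
      try rewrite Da; try rewrite Db; try rewrite Sab;
      unfold Rmin, Rabs; repeat destruct Rle_dec; repeat destruct Rcase_abs; lra.
Qed.

Definition pk {T} (K : kit T) a b y := (dk K a y - dk K b y + dk K a b) / 2.

Lemma pk_lip {T} (K : kit T) a b y z : Rabs (pk K a b y - pk K a b z) <= dk K y z.
Proof.
  destruct (dk_metric K) as [_ [_ [Hs Ht]]].
  pose proof (Ht a y z). pose proof (Ht a z y). pose proof (Ht b y z). pose proof (Ht b z y).
  pose proof (Hs y z).
  unfold pk; unfold Rabs; destruct Rcase_abs; lra.
Qed.

Lemma pk_range {T} (K : kit T) a b y : 0 <= pk K a b y <= dk K a b.
Proof.
  destruct (dk_metric K) as [_ [_ [Hs Ht]]].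
  pose proof (Ht a y b). pose proof (Ht a b y). pose proof (Ht b a y). pose proof (Hs a b).
  pose proof (Hs b y).
  unfold pk; lra.
Qed.

Lemma pk_g {T} (K : kit T) a b t : 0 <= t <= dk K a b -> pk K a b (gk K a b t) = t.
Proof.
  intros Ht. destruct (gk_geod K a b) as [G0 [G1 G2]].
  destruct (dk_metric K) as [_ [_ [Hs _]]].
  unfold pk.
  assert (dk K a (gk K a b t) = t).
  { rewrite <- G0 at 1. rewrite G2 by lra. unfold Rabs; destruct Rcase_abs; lra. }
  assert (dk K b (gk K a b t) = dk K a b - t).
  { rewrite <- G1 at 1. rewrite G2 by lra. unfold Rabs; destruct Rcase_abs; lra. }
  lra.
Qed.

Lemma pk_F4 {T} (K : kit T) a b y z :
  dk K y z < dk K y (gk K a b (pk K a b y)) -> pk K a b z = pk K a b y.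
Proof.
  intros H.
  pose proof (pk_range K a b y) as R.
  pose proof (gk_spec K a b _ R) as G.
  unfold pk, dk in *.
  remember ((kh K a + kh K y - 2 * km K a y - (kh K b + kh K y - 2 * km K b y) +
        (kh K a + kh K b - 2 * km K a b)) / 2) as py eqn:Hpy.
  pose proof (ultra3 K a b y) as U1. pose proof (ultra3 K a b z) as U2.
  pose proof (ultra3 K a y z) as U3. pose proof (ultra3 K b y z) as U4.
  cbv zeta in U1, U2, U3, U4.
  pose proof (km_le K a b). pose proof (km_le2 K a b). pose proof (km_nonneg K a b).
  pose proof (km_le K a y). pose proof (km_le2 K a y). pose proof (km_nonneg K a y).
  pose proof (km_le K b y). pose proof (km_le2 K b y). pose proof (km_nonneg K b y).
  pose proof (km_le K a z). pose proof (km_le2 K a z). pose proof (km_nonneg K a z).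
  pose proof (km_le K b z). pose proof (km_le2 K b z). pose proof (km_nonneg K b z).
  pose proof (km_le K y z). pose proof (km_le2 K y z). pose proof (km_nonneg K y z).
  destruct G as [[g1 [g2 g3]]|[g1 [g2 g3]]]; rewrite g2 in H;
    rewrite (km_sym K y (gk K a b py)), g3 in H; try rewrite (km_sym K y a) in *; try rewrite (km_sym K y b) in *;
    unfold Rmin in H; destruct Rle_dec;
    destruct U1 as [[]|[[]|[]]]; destruct U2 as [[]|[[]|[]]];
    destruct U3 as [[]|[[]|[]]]; destruct U4 as [[]|[[]|[]]]; lra.
Qed.

Lemma cross_back {T} (dT : T -> T -> R) (p : R -> T) (W : T -> Prop) (Q : T) :
  (forall x y, dT x y = dT y x) ->
  path_continuous dT p ->
  (forall y, W y -> exists e, 0 < e /\ forall z, dT y z < e -> W z) ->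
  (forall y, (forall e, 0 < e -> exists w, W w /\ dT y w < e) -> W y \/ y = Q) ->
  ~ W (p 0) -> forall tau, 0 <= tau <= 1 -> W (p tau) ->
  exists s, 0 <= s < tau /\ p s = Q.
Proof.
  intros Hsym Hc Hop Hcl H0 tau Htau Hw.
  set (S := fun s => 0 <= s <= tau /\ ~ W (p s)).
  assert (Hb : bound S). { exists tau. intros s [Hs _]. lra. }
  assert (Hn : exists s, S s). { exists 0. split; [lra|auto]. }
  destruct (completeness S Hb Hn) as [s0 [Hub Hlub]].
  assert (Hs0 : 0 <= s0). { apply Hub. split; [lra|auto]. }
  assert (Hs1 : s0 <= tau). { apply Hlub. intros s [Hs _]. lra. }
  assert (KF : forall r, s0 < r <= tau -> W (p r)).
  { intros r Hr. apply NNPP. intros Hnw. assert (r <= s0) by (apply Hub; split; [lra|auto]). lra. }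
  assert (Hnw : ~ W (p s0)).
  { intros Hw0. destruct (Hop _ Hw0) as [e [He He2]].
    destruct (Hc s0 ltac:(lra) e He) as [eta [Heta Heta2]].
    destruct (classic (exists s, S s /\ s > s0 - eta / 2)) as [[s [[Hs Hsn] Hs2]]|Hno].
    - apply Hsn. apply He2. rewrite Hsym. apply Heta2. lra.
      assert (s <= s0) by (apply Hub; split; auto). unfold Rabs; destruct Rcase_abs; lra.
    - assert (s0 <= s0 - eta / 2). { apply Hlub. intros s Hs. apply Rnot_lt_le. intros Hlt.
        apply Hno. exists s. split; auto. }
      lra. }
  assert (Hlt : s0 < tau). { destruct (Req_dec s0 tau) as [->|]; [contradiction|lra]. }
  exists s0. split; [lra|].
  destruct (Hcl (p s0)) as [|]; [|contradiction|auto].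
  intros e He. destruct (Hc s0 ltac:(lra) e He) as [eta [Heta Heta2]].
  set (r := Rmin tau (s0 + eta / 2)).
  assert (Hr : s0 < r <= tau). { unfold r, Rmin; destruct Rle_dec; lra. }
  exists (p r). split; [apply KF; auto|].
  rewrite Hsym. apply Heta2. lra. unfold r, Rmin, Rabs; destruct Rle_dec; destruct Rcase_abs; lra.
Qed.

Lemma rev_cont {T} (dT : T -> T -> R) (p : R -> T) :
  path_continuous dT p -> path_continuous dT (fun t => p (1 - t)).
Proof.
  intros Hc t Ht e He. destruct (Hc (1 - t) ltac:(lra) e He) as [eta [Heta H]].
  exists eta. split; auto. intros s Hs Hst. apply H. lra.
  replace (1 - s - (1 - t)) with (- (s - t)) by lra. rewrite Rabs_Ropp. auto.
Qed.

Lemma cross_fwd {T} (dT : T -> T -> R) (p : R -> T) (W : T -> Prop) (Q : T) :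
  (forall x y, dT x y = dT y x) ->
  path_continuous dT p ->
  (forall y, W y -> exists e, 0 < e /\ forall z, dT y z < e -> W z) ->
  (forall y, (forall e, 0 < e -> exists w, W w /\ dT y w < e) -> W y \/ y = Q) ->
  ~ W (p 1) -> forall tau, 0 <= tau <= 1 -> W (p tau) ->
  exists s, tau < s <= 1 /\ p s = Q.
Proof.
  intros Hsym Hc Hop Hcl H1 tau Ht Hw.
  destruct (cross_back dT (fun t => p (1 - t)) W Q Hsym (rev_cont dT p Hc) Hop Hcl)
    with (tau := 1 - tau) as [s [Hs Hps]].
  - replace (1 - 0) with 1 by lra. auto.
  - lra.
  - replace (1 - (1 - tau)) with tau by lra. auto.
  - exists (1 - s). split; [lra|auto].
Qed.

Theorem kit_Rtree {T} (K : kit T) : R_tree (dk K).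
Proof.
  split; [apply dk_metric|].
  destruct (dk_metric K) as [Hpos [Hid [Hsym Htri]]].
  intros a b. exists (gk K a b). split; [apply gk_geod|].
  destruct (gk_geod K a b) as [G0 [G1 G2]].
  assert (Pa : pk K a b a = 0).
  { rewrite <- G0 at 2. apply pk_g. split; [lra|apply Hpos]. }
  assert (Pb : pk K a b b = dk K a b).
  { rewrite <- G1 at 2. apply pk_g. split; [apply Hpos|lra]. }
  intros p [Hc [Hp0 [Hp1 Hinj]]] q. split.
  - intros [s [Hs ->]].
    destruct (classic (p s = gk K a b (pk K a b (p s)))) as [Heq|Hne].
    + exists (pk K a b (p s)). split; [apply pk_range|auto].
    + set (t0 := pk K a b (p s)) in *.
      set (Q := gk K a b t0).
      set (W := fun y => pk K a b y = t0 /\ y <> Q).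
      assert (Hop : forall y, W y -> exists e, 0 < e /\ forall z, dk K y z < e -> W z).
      { intros y [Hy1 Hy2]. exists (dk K y Q). split.
        - destruct (Hpos y Q); auto. exfalso. apply Hy2. apply Hid. auto.
        - intros z Hz. split.
          + rewrite <- Hy1. apply pk_F4. rewrite Hy1. exact Hz.
          + intros ->. lra. }
      assert (Hcl : forall y, (forall e, 0 < e -> exists w, W w /\ dk K y w < e) -> W y \/ y = Q).
      { intros y Hy. destruct (classic (y = Q)) as [|Hn]; [right; auto|left; split; auto].
        destruct (Req_dec (pk K a b y) t0) as [|Hne2]; auto. exfalso.
        destruct (Hy (Rabs (pk K a b y - t0))) as [w [[Hw1 _] Hw2]].
        { apply Rabs_pos_lt. lra. }
        pose proof (pk_lip K a b y w). rewrite Hw1 in H. lra. }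
      assert (HnA : ~ W (p 0)).
      { rewrite Hp0. intros [H1 H2]. apply H2. unfold Q. rewrite <- H1, Pa. auto. }
      assert (HnB : ~ W (p 1)).
      { rewrite Hp1. intros [H1 H2]. apply H2. unfold Q. rewrite <- H1, Pb. auto. }
      assert (Hws : W (p s)) by (split; auto).
      destruct (cross_back _ p W Q Hsym Hc Hop Hcl HnA s Hs Hws) as [s1 [Hs1 E1]].
      destruct (cross_fwd _ p W Q Hsym Hc Hop Hcl HnB s Hs Hws) as [s2 [Hs2 E2]].
      assert (s1 = s2) by (apply Hinj; [lra|lra|congruence]). lra.
  - intros [t0 [Ht0 ->]].
    destruct (Req_dec t0 (dk K a b)) as [Heq|Hne].
    + exists 1. split; [lra|]. rewrite Hp1, Heq. auto.
    + set (Q := gk K a b t0).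
      set (W := fun y => pk K a b y > t0).
      assert (Hop : forall y, W y -> exists e, 0 < e /\ forall z, dk K y z < e -> W z).
      { intros y Hy. exists (pk K a b y - t0). split; [unfold W in Hy; lra|].
        intros z Hz. pose proof (pk_lip K a b y z). unfold W.
        unfold Rabs in H; destruct Rcase_abs; lra. }
      assert (Hcl : forall y, (forall e, 0 < e -> exists w, W w /\ dk K y w < e) -> W y \/ y = Q).
      { intros y Hy. destruct (classic (W y)) as [|HnW]; [left; auto|right].
        unfold W in HnW.
        assert (Hge : pk K a b y >= t0).
        { apply Rnot_lt_ge. intros Hlt.
          destruct (Hy (t0 - pk K a b y)) as [w [Hw1 Hw2]]; [lra|].
          pose proof (pk_lip K a b y w). unfold W in Hw1.
          unfold Rabs in H; destruct Rcase_abs; lra. }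
        assert (Hy0 : pk K a b y = t0) by lra.
        apply NNPP. intros HnQ.
        assert (Hd : 0 < dk K y Q).
        { destruct (Hpos y Q); auto. exfalso. apply HnQ. apply Hid. auto. }
        destruct (Hy _ Hd) as [w [Hw1 Hw2]].
        assert (pk K a b w = pk K a b y).
        { apply pk_F4. rewrite Hy0. auto. }
        unfold W in Hw1. lra. }
      assert (HnA : ~ W (p 0)). { rewrite Hp0. unfold W. lra. }
      assert (HwB : W (p 1)). { rewrite Hp1. unfold W. lra. }
      destruct (cross_back _ p W Q Hsym Hc Hop Hcl HnA 1 ltac:(lra) HwB) as [s1 [Hs1 E1]].
      exists s1. split; [lra|auto].
Qed.

Record cdata := CData {
  cI : Type; cZ : cI -> Prop; cL : cI -> R; cc : cI -> cI -> R; ci0 : cI;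
  cZ0 : cZ ci0;
  c_diag : forall i, cZ i -> cc i i = cL i;
  c_sym : forall i j, cZ i -> cZ j -> cc i j = cc j i;
  c_nn : forall i j, cZ i -> cZ j -> 0 <= cc i j;
  c_le : forall i j, cZ i -> cZ j -> cc i j <= cL i;
  c_ultra : forall i j k, cZ i -> cZ j -> cZ k -> Rmin (cc i j) (cc j k) <= cc i k }.

Arguments cZ {c} _.
Arguments cL {c} _.
Arguments cc {c} _ _.
Arguments ci0 {c}.

Section dummy. End dummy.

Definition cls (C : cdata) (i : cI C) (s : R) : cI C -> R -> Prop :=
  fun j t => cZ j /\ t = s /\ s <= cc i j.

Definition TT (C : cdata) := {S : cI C -> R -> Prop |
  exists i s, cZ i /\ 0 <= s <= cL i /\ S = cls C i s}.

Lemma cls_inj (C : cdata) (i : cI C) s (j : cI C) t : cZ i -> 0 <= s <= cL i -> cls C i s = cls C j t ->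
  s = t /\ s <= cc j i.
Proof.
  intros Hi Hs E. assert (H : cls C i s i s).
  { split; [auto|split; auto]. rewrite c_diag; auto; lra. }
  rewrite E in H. destruct H as [_ [H1 H2]]. subst; auto.
Qed.

Lemma cls_eq (C : cdata) (i j : cI C) s : cZ i -> cZ j -> s <= cc i j -> cls C i s = cls C j s.
Proof.
  intros Hi Hj Hs. apply functional_extensionality; intro k.
  apply functional_extensionality; intro t. apply propositional_extensionality.
  unfold cls. split; intros [Hk [Ht Hc]]; split; auto; split; auto.
  - pose proof (c_ultra C j i k Hj Hi Hk). rewrite (c_sym C j i) in H by auto.
    unfold Rmin in H; destruct Rle_dec; lra.
  - pose proof (c_ultra C i j k Hi Hj Hk). unfold Rmin in H; destruct Rle_dec; lra.
Qed.

Lemma T_rep (C : cdata) (S : TT C) : {p : cI C * R | cZ (fst p) /\ 0 <= snd p <= cL (fst p) /\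
   proj1_sig S = cls C (fst p) (snd p)}.
Proof.
  apply constructive_indefinite_description. destruct S as [S [i [s H]]].
  exists (i, s). simpl. auto.
Qed.

Definition ri {C} (S : TT C) := fst (proj1_sig (T_rep C S)).
Definition rs {C} (S : TT C) := snd (proj1_sig (T_rep C S)).

Lemma r_spec {C} (S : TT C) : cZ (ri S) /\ 0 <= rs S <= cL (ri S) /\ proj1_sig S = cls C (ri S) (rs S).
Proof. unfold ri, rs. destruct (T_rep C S) as [p Hp]. simpl. auto. Qed.

Definition hT {C} (S : TT C) := rs S.
Definition mT {C} (S S' : TT C) := Rmin (Rmin (rs S) (rs S')) (cc (ri S) (ri S')).

Lemma min_congr (C : cdata) (i j k : cI C) s s' : cZ i -> cZ j -> cZ k -> s <= cc i j ->
  Rmin (Rmin s s') (cc j k) = Rmin (Rmin s s') (cc i k).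
Proof.
  intros Hi Hj Hk Hs.
  pose proof (c_ultra C i j k Hi Hj Hk). pose proof (c_ultra C j i k Hj Hi Hk).
  rewrite (c_sym C j i) in H0 by auto.
  unfold Rmin in *; repeat destruct Rle_dec; lra.
Qed.

Lemma rep_any {C} (S : TT C) (i : cI C) s : cZ i -> 0 <= s <= cL i -> proj1_sig S = cls C i s ->
  rs S = s /\ s <= cc i (ri S).
Proof.
  intros Hi Hs E. destruct (r_spec S) as [H1 [H2 H3]]. rewrite E in H3.
  destruct (cls_inj C i s _ _ Hi Hs H3) as [-> H]. split; auto. rewrite c_sym; auto.
Qed.

Lemma mT_any {C} (S S' : TT C) (i : cI C) s (i' : cI C) s' : cZ i -> 0 <= s <= cL i -> proj1_sig S = cls C i s ->
  cZ i' -> 0 <= s' <= cL i' -> proj1_sig S' = cls C i' s' ->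
  mT S S' = Rmin (Rmin s s') (cc i i').
Proof.
  intros Hi Hs E Hi' Hs' E'.
  destruct (rep_any S i s Hi Hs E) as [R1 R2].
  destruct (rep_any S' i' s' Hi' Hs' E') as [R3 R4].
  destruct (r_spec S) as [Z1 _]. destruct (r_spec S') as [Z2 _].
  unfold mT. rewrite R1, R3.
  rewrite (min_congr C i (ri S) (ri S') s s') by auto.
  rewrite (c_sym C i (ri S')) by auto.
  rewrite (Rmin_comm s s').
  rewrite (min_congr C i' (ri S') i s' s) by auto.
  rewrite (c_sym C i' i) by auto. auto.
Qed.

Definition clampC {C} (i : cI C) s := Rmax 0 (Rmin s (cL i)).

Lemma L_nn {C : cdata} (i : cI C) : cZ i -> 0 <= cL i.
Proof. intros H. rewrite <- c_diag by auto. apply c_nn; auto. Qed.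

Lemma clamp_id {C} (i : cI C) s : 0 <= s <= cL i -> clampC i s = s.
Proof. intros. unfold clampC, Rmax, Rmin. repeat destruct Rle_dec; lra. Qed.

Lemma clamp_rng {C} (i : cI C) s : cZ i -> 0 <= clampC i s <= cL i.
Proof. intros H. pose proof (L_nn i H). unfold clampC, Rmax, Rmin. repeat destruct Rle_dec; lra. Qed.

Definition mk {C} (i : cI C) (Hi : cZ i) (s : R) : TT C :=
  exist _ (cls C i (clampC i s)) (ex_intro _ i (ex_intro _ (clampC i s) (conj Hi (conj (clamp_rng i s Hi) eq_refl)))).

Definition ancT {C} (S : TT C) (t : R) : TT C := mk (ri S) (proj1 (r_spec S)) t.

Lemma TT_ext {C} (S S' : TT C) : proj1_sig S = proj1_sig S' -> S = S'.
Proof. destruct S, S'; simpl; intros ->. f_equal. apply proof_irrelevance. Qed.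

Definition Tkit (C : cdata) : kit (TT C).
Proof.
  refine (Kit (TT C) hT mT ancT _ _ _ _ _ _ _ _).
  - intros x y. unfold mT. rewrite (Rmin_comm (rs x) (rs y)).
    destruct (r_spec x) as [Z1 _]; destruct (r_spec y) as [Z2 _]. rewrite c_sym; auto.
  - intros x. unfold mT, hT. destruct (r_spec x) as [Z1 [R1 _]]. rewrite c_diag by auto.
    unfold Rmin; repeat destruct Rle_dec; lra.
  - intros x y. unfold mT. destruct (r_spec x) as [Z1 [R1 _]]; destruct (r_spec y) as [Z2 [R2 _]].
    pose proof (c_nn C _ _ Z1 Z2). unfold Rmin; repeat destruct Rle_dec; lra.
  - intros x y. unfold mT, hT. unfold Rmin; repeat destruct Rle_dec; lra.
  - intros x y z. unfold mT. destruct (r_spec x) as [Z1 _]; destruct (r_spec y) as [Z2 _];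
      destruct (r_spec z) as [Z3 _].
    pose proof (c_ultra C _ _ _ Z1 Z2 Z3). unfold Rmin in *; repeat destruct Rle_dec; lra.
  - intros x y E1 E2. unfold mT, hT in *.
    destruct (r_spec x) as [Z1 [R1 P1]]; destruct (r_spec y) as [Z2 [R2 P2]].
    apply TT_ext. rewrite P1, P2, <- E2. apply cls_eq; auto.
    unfold Rmin in E1; repeat destruct Rle_dec; lra.
  - intros x t Ht. unfold hT in *. unfold ancT.
    pose proof (r_spec x) as [Z1 [R1 P1]].
    destruct (rep_any (mk (ri x) (proj1 (r_spec x)) t) (ri x) t Z1 ltac:(lra)) as [E _].
    + simpl. rewrite clamp_id by lra. auto.
    + exact E.
  - intros x t y Ht. unfold hT in *. unfold ancT.
    pose proof (r_spec x) as [Z1 [R1 P1]]. pose proof (r_spec y) as [Z2 [R2 P2]].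
    rewrite (mT_any _ y (ri x) t (ri y) (rs y)); auto; try lra.
    + unfold mT. unfold Rmin; repeat destruct Rle_dec; lra.
    + simpl. rewrite clamp_id by lra. auto.
Defined.

Lemma dk_mk (C : cdata) (i : cI C) (Hi : cZ i) s (j : cI C) (Hj : cZ j) t :
  0 <= s <= cL i -> 0 <= t <= cL j ->
  dk (Tkit C) (mk i Hi s) (mk j Hj t) = s + t - 2 * Rmin (Rmin s t) (cc i j).
Proof.
  intros Hs Ht. unfold dk. simpl.
  rewrite (mT_any _ _ i s j t); auto; try (simpl; rewrite clamp_id; auto).
  unfold hT.
  rewrite (proj1 (rep_any (mk i Hi s) i s Hi Hs ltac:(simpl; rewrite clamp_id; auto))).
  rewrite (proj1 (rep_any (mk j Hj t) j t Hj Ht ltac:(simpl; rewrite clamp_id; auto))).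
  auto.
Qed.

Lemma mk_eq (C : cdata) (i : cI C) (Hi : cZ i) (j : cI C) (Hj : cZ j) s :
  0 <= s <= cL i -> s <= cc i j -> mk i Hi s = mk j Hj s.
Proof.
  intros Hs Hc. apply TT_ext. simpl.
  assert (s <= cL j). { pose proof (c_le C j i Hj Hi). rewrite c_sym in Hc by auto. lra. }
  rewrite !clamp_id by lra. apply cls_eq; auto.
Qed.

Section Paths.
Context {X : Type} (d : X -> X -> R) (Hm : is_metric d).

Lemma dsym x y : d x y = d y x. Proof. destruct Hm as [_ [_ [H _]]]. auto. Qed.
Lemma dtri x y z : d x z <= d x y + d y z. Proof. destruct Hm as [_ [_ [_ H]]]. auto. Qed.
Lemma dpos x y : 0 <= d x y. Proof. destruct Hm as [H _]. auto. Qed.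
Lemma dxx x : d x x = 0. Proof. destruct Hm as [_ [H _]]. apply H. auto. Qed.

Definition concat (P Q : R -> X) : R -> X :=
  fun t => if Rle_dec t (1/2) then P (2 * t) else Q (2 * t - 1).

Lemma concat_cont P Q : path_continuous d P -> path_continuous d Q -> P 1 = Q 0 ->
  path_continuous d (concat P Q).
Proof.
  intros HP HQ E t Ht e He. unfold concat.
  destruct (Rtotal_order t (1/2)) as [Hlt|[Heq|Hgt]].
  - destruct (HP (2 * t) ltac:(lra) e He) as [eta [Heta H]].
    exists (Rmin (eta / 2) (1/2 - t)). split.
    { unfold Rmin; destruct Rle_dec; lra. }
    intros s Hs Hst. assert (Hm1 := Rmin_l (eta/2) (1/2 - t)). assert (Hm2 := Rmin_r (eta/2) (1/2 - t)).
    assert (Ha : Rabs (s - t) < eta / 2 /\ Rabs (s - t) < 1/2 - t) by lra.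
    destruct Ha as [Ha1 Ha2]. apply Rabs_def2 in Ha1. apply Rabs_def2 in Ha2.
    destruct Rle_dec; [|lra]. destruct Rle_dec; [|lra].
    apply H. lra. apply Rabs_def1; lra.
  - subst t. destruct (HP 1 ltac:(lra) e He) as [eta1 [Heta1 H1]].
    destruct (HQ 0 ltac:(lra) e He) as [eta2 [Heta2 H2]].
    exists (Rmin (eta1 / 2) (eta2 / 2)). split.
    { unfold Rmin; destruct Rle_dec; lra. }
    intros s Hs Hst. assert (Hm1 := Rmin_l (eta1/2) (eta2/2)). assert (Hm2 := Rmin_r (eta1/2) (eta2/2)).
    apply Rabs_def2 in Hst.
    destruct (Rle_dec (1/2) (1/2)); [|lra].
    replace (2 * (1/2)) with 1 by lra.
    destruct Rle_dec.
    + apply H1. lra. apply Rabs_def1; lra.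
    + rewrite E. apply H2. lra. apply Rabs_def1; lra.
  - destruct (HQ (2 * t - 1) ltac:(lra) e He) as [eta [Heta H]].
    exists (Rmin (eta / 2) (t - 1/2)). split.
    { unfold Rmin; destruct Rle_dec; lra. }
    intros s Hs Hst. assert (Hm1 := Rmin_l (eta/2) (t - 1/2)). assert (Hm2 := Rmin_r (eta/2) (t - 1/2)).
    apply Rabs_def2 in Hst.
    destruct Rle_dec; [lra|]. destruct Rle_dec; [lra|].
    apply H. lra. apply Rabs_def1; lra.
Qed.

Lemma concat_0 P Q : concat P Q 0 = P 0.
Proof. unfold concat. destruct Rle_dec; [|lra]. f_equal; lra. Qed.
Lemma concat_1 P Q : concat P Q 1 = Q 1.
Proof. unfold concat. destruct Rle_dec; [lra|]. f_equal; lra. Qed.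
Lemma concat_all (Phi : X -> Prop) P Q :
  (forall t, 0 <= t <= 1 -> Phi (P t)) -> (forall t, 0 <= t <= 1 -> Phi (Q t)) ->
  forall t, 0 <= t <= 1 -> Phi (concat P Q t).
Proof. intros H1 H2 t Ht. unfold concat. destruct Rle_dec; [apply H1|apply H2]; lra. Qed.

Lemma seg_cont (g : R -> X) (L a b : R) :
  (forall s t, 0 <= s <= L -> 0 <= t <= L -> d (g s) (g t) = Rabs (s - t)) ->
  0 <= a <= L -> 0 <= b <= L ->
  path_continuous d (fun t => g (a + t * (b - a))).
Proof.
  intros Hg Ha Hb t Ht e He.
  exists (e / (Rabs (b - a) + 1)). split.
  { apply Rdiv_lt_0_compat; auto. pose proof (Rabs_pos (b - a)). lra. }
  intros s Hs Hst.
  assert (R1 : forall r, 0 <= r <= 1 -> 0 <= a + r * (b - a) <= L).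
  { intros r Hr. destruct (Rle_dec a b).
    - split; [nra|nra].
    - split; nra. }
  rewrite Hg by (apply R1; auto).
  replace (a + s * (b - a) - (a + t * (b - a))) with ((s - t) * (b - a)) by ring.
  rewrite Rabs_mult.
  pose proof (Rabs_pos (b - a)). pose proof (Rabs_pos (s - t)).
  assert (Hq : Rabs (s - t) * (Rabs (b - a) + 1) < e).
  { apply (Rmult_lt_compat_r (Rabs (b - a) + 1)) in Hst; [|lra].
    unfold Rdiv in Hst. rewrite Rmult_assoc, Rinv_l in Hst by lra. lra. }
  nra.
Qed.

End Paths.

Definition sup_of (E : R -> Prop) : R :=
  match excluded_middle_informative (bound E /\ exists x, E x) with
  | left H => proj1_sig (completeness E (proj1 H) (proj2 H))
  | right _ => 0 end.

Lemma sup_spec E : bound E -> (exists x, E x) -> is_lub E (sup_of E).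
Proof.
  intros Hb Hn. unfold sup_of. destruct excluded_middle_informative as [H|H].
  - destruct (completeness E _ _) as [m Hm]. simpl. auto.
  - exfalso; auto.
Qed.

Lemma le_of_forall_lt (m c : R) : (forall u, 0 <= u < m -> u <= c) -> 0 <= c -> m <= c.
Proof.
  intros H Hc. apply Rnot_lt_le. intros Hlt.
  assert ((c + m) / 2 <= c) by (apply H; lra). lra.
Qed.

Section XS.
Context {X : Type} (d : X -> X -> R) (Hm : is_metric d)
  (Hg : forall x y, exists g, is_geodesic d g x y)
  (x0 : X) (Z : X -> Prop) (gam : X -> R -> X)
  (hgam : forall z, Z z -> is_geodesic d (gam z) x0 z).

Definition LL z := d x0 z.

Lemma gam_0 z : Z z -> gam z 0 = x0.
Proof. intros H. apply (hgam z H). Qed.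
Lemma gam_L z : Z z -> gam z (LL z) = z.
Proof. intros H. apply (hgam z H). Qed.
Lemma gam_iso z s t : Z z -> 0 <= s <= LL z -> 0 <= t <= LL z -> d (gam z s) (gam z t) = Rabs (s - t).
Proof. intros H. apply (hgam z H). Qed.
Lemma gam_h z s : Z z -> 0 <= s <= LL z -> d x0 (gam z s) = s.
Proof.
  intros H Hs. rewrite <- (gam_0 z H) at 1. rewrite gam_iso; auto.
  - unfold Rabs; destruct Rcase_abs; lra.
  - pose proof (dpos d Hm x0 z). unfold LL in *. lra.
Qed.
Lemma LL_nn z : 0 <= LL z. Proof. apply (dpos d Hm). Qed.

Definition rel u z z' := 0 <= u /\ exists s s' (P : R -> X),
  u <= s <= LL z /\ u <= s' <= LL z' /\ path_continuous d P /\ P 0 = gam z s /\ P 1 = gam z' s' /\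
  forall t, 0 <= t <= 1 -> u <= d x0 (P t).

Lemma rel_bound u z z' : rel u z z' -> 0 <= u /\ u <= LL z /\ u <= LL z'.
Proof. intros [H0 [s [s' [P [H1 [H2 _]]]]]]. lra. Qed.

Lemma rel_mono u v z z' : rel u z z' -> 0 <= v <= u -> rel v z z'.
Proof.
  intros [H0 [s [s' [P [H1 [H2 [H3 [H4 [H5 H6]]]]]]]]] Hv. split; [lra|].
  exists s, s', P. repeat split; try lra; auto. intros t Ht. specialize (H6 t Ht). lra.
Qed.

Lemma rel_sym u z z' : rel u z z' -> rel u z' z.
Proof.
  intros [H0 [s [s' [P [H1 [H2 [H3 [H4 [H5 H6]]]]]]]]]. split; [lra|].
  exists s', s, (fun t => P (1 - t)). repeat split; try lra.
  - apply rev_cont. auto.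
  - replace (1 - 0) with 1 by lra. auto.
  - replace (1 - 1) with 0 by lra. auto.
  - intros t Ht. apply H6. lra.
Qed.

Lemma const_cont (x : X) : path_continuous d (fun _ => x).
Proof. intros t Ht e He. exists 1. split; [lra|]. intros. rewrite (dxx d Hm). auto. Qed.

Lemma rel_pt u z z' : Z z -> Z z' -> 0 <= u <= LL z -> 0 <= u <= LL z' -> gam z u = gam z' u ->
  rel u z z'.
Proof.
  intros Hz Hz' H1 H2 E. split; [lra|]. exists u, u, (fun _ => gam z u).
  repeat split; try lra; auto. apply const_cont.
  intros. rewrite gam_h; auto; lra.
Qed.

Lemma rel_refl u z : Z z -> 0 <= u <= LL z -> rel u z z.
Proof. intros. apply rel_pt; auto. Qed.

Lemma seg_gam z a b : Z z -> 0 <= a <= LL z -> 0 <= b <= LL z ->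
  path_continuous d (fun t => gam z (a + t * (b - a))) /\
  (forall t, 0 <= t <= 1 -> Rmin a b <= d x0 (gam z (a + t * (b - a)))).
Proof.
  intros Hz Ha Hb. split.
  - apply seg_cont with (L := LL z); auto. intros; apply gam_iso; auto.
  - intros t Ht. assert (0 <= a + t * (b - a) <= LL z).
    { destruct (Rle_dec a b); split; nra. }
    rewrite gam_h; auto. unfold Rmin; destruct Rle_dec; nra.
Qed.

Lemma rel_trans u z z' z'' : Z z' -> rel u z z' -> rel u z' z'' -> rel u z z''.
Proof.
  intros Hz' [H0 [s1 [s1' [P [H1 [H2 [H3 [H4 [H5 H6]]]]]]]]]
    [_ [s2' [s2 [Q [G1 [G2 [G3 [G4 [G5 G6]]]]]]]]].
  split; [lra|]. exists s1, s2.
  destruct (seg_gam z' s1' s2' Hz' ltac:(lra) ltac:(lra)) as [Sc Sh].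
  set (S := fun t => gam z' (s1' + t * (s2' - s1'))) in *.
  exists (concat (concat P S) Q).
  split; [lra|]. split; [lra|]. refine (conj _ (conj _ (conj _ _))).
  - apply concat_cont; auto. apply concat_cont; auto.
    + rewrite H5. unfold S. f_equal. lra.
    + rewrite concat_1. unfold S. rewrite G4. f_equal. lra.
  - rewrite !concat_0. auto.
  - rewrite concat_1. auto.
  - apply (concat_all (fun x => u <= d x0 x)); auto. apply (concat_all (fun x => u <= d x0 x)); auto.
    intros t Ht. specialize (Sh t Ht). unfold S. unfold Rmin in Sh; destruct Rle_dec; lra.
Qed.

Definition cX z z' := sup_of (fun u => rel u z z').

Lemma cX_lub z z' : Z z -> Z z' -> is_lub (fun u => rel u z z') (cX z z').
Proof.
  intros Hz Hz'. apply sup_spec.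
  - exists (LL z). intros u Hu. apply rel_bound in Hu. lra.
  - exists 0. apply rel_pt; auto; try (pose proof (LL_nn z); pose proof (LL_nn z'); lra).
    rewrite !gam_0; auto.
Qed.

Lemma cX_ge u z z' : Z z -> Z z' -> rel u z z' -> u <= cX z z'.
Proof. intros Hz Hz' H. apply (cX_lub z z' Hz Hz'). auto. Qed.

Lemma cX_nn z z' : Z z -> Z z' -> 0 <= cX z z'.
Proof.
  intros Hz Hz'. apply cX_ge; auto. apply rel_pt; auto; try (pose proof (LL_nn z); pose proof (LL_nn z'); lra).
  rewrite !gam_0; auto.
Qed.

Lemma cX_le z z' : Z z -> Z z' -> cX z z' <= LL z.
Proof.
  intros Hz Hz'. apply (cX_lub z z' Hz Hz'). intros u Hu. apply rel_bound in Hu. lra.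
Qed.

Lemma rel_of_lt u z z' : Z z -> Z z' -> 0 <= u < cX z z' -> rel u z z'.
Proof.
  intros Hz Hz' Hu. destruct (cX_lub z z' Hz Hz') as [Hub Hlub].
  destruct (classic (exists v, rel v z z' /\ u <= v)) as [[v [Hv Huv]]|Hno].
  - apply (rel_mono v); auto; lra.
  - assert (cX z z' <= u); [|lra]. apply Hlub. intros v Hv. apply Rnot_lt_le. intros Hlt.
    apply Hno. exists v. split; auto. lra.
Qed.

Lemma cX_diag z : Z z -> cX z z = LL z.
Proof.
  intros Hz. apply Rle_antisym. apply cX_le; auto. apply cX_ge; auto. apply rel_refl; auto.
  pose proof (LL_nn z); lra.
Qed.

Lemma cX_sym z z' : Z z -> Z z' -> cX z z' = cX z' z.
Proof.
  intros Hz Hz'. unfold cX. f_equal. apply functional_extensionality; intro u.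
  apply propositional_extensionality. split; apply rel_sym.
Qed.

Lemma cX_ultra z z' z'' : Z z -> Z z' -> Z z'' -> Rmin (cX z z') (cX z' z'') <= cX z z''.
Proof.
  intros Hz Hz' Hz''. apply le_of_forall_lt; [|apply cX_nn; auto].
  intros u Hu. apply cX_ge; auto. apply rel_trans with z'; auto.
  - apply rel_of_lt; auto. pose proof (Rmin_l (cX z z') (cX z' z'')). lra.
  - apply rel_of_lt; auto. pose proof (Rmin_r (cX z z') (cX z' z'')). lra.
Qed.

End XS.

Section XS2.
Context {X : Type} (d : X -> X -> R) (Hm : is_metric d)
  (Hg : forall x y, exists g, is_geodesic d g x y)
  (x0 : X) (Z : X -> Prop) (gam : X -> R -> X)
  (hgam : forall z, Z z -> is_geodesic d (gam z) x0 z)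
  (delta Delta : R) (hhyp : hyperbolic d delta) (hbot : bottleneck d Delta).

Lemma geod_iso g x y : is_geodesic d g x y -> forall r, 0 <= r <= d x y ->
  d x (g r) = r /\ d (g r) y = d x y - r.
Proof.
  intros [G0 [G1 G2]] r Hr. pose proof (dpos d Hm x y). split.
  - rewrite <- G0 at 1. rewrite G2 by lra. unfold Rabs; destruct Rcase_abs; lra.
  - rewrite <- G1 at 1. rewrite G2 by lra. unfold Rabs; destruct Rcase_abs; lra.
Qed.

Lemma ub z z' s s' : Z z -> Z z' -> 0 <= s <= LL d x0 z -> 0 <= s' <= LL d x0 z' ->
  (s + s' - d (gam z s) (gam z' s')) / 2 <= cX d x0 gam z z'.
Proof.
  intros Hz Hz' Hs Hs'. set (x := gam z s). set (y := gam z' s').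
  assert (hx : d x0 x = s) by (apply (gam_h d Hm x0 Z gam hgam); auto).
  assert (hy : d x0 y = s') by (apply (gam_h d Hm x0 Z gam hgam); auto).
  pose proof (dtri d Hm x x0 y). pose proof (dtri d Hm x0 x y). pose proof (dtri d Hm x0 y x).
  pose proof (dsym d Hm x x0). pose proof (dsym d Hm x y).
  destruct (Hg x y) as [k Hk]. pose proof (geod_iso k x y Hk) as Ki.
  destruct Hk as [K0 [K1 K2]].
  set (D := d x y) in *.
  pose proof (dpos d Hm x y).
  apply (cX_ge d Hm x0 Z gam hgam); auto. split; [lra|].
  exists s, s', (fun t => k (0 + t * (D - 0))).
  split; [lra|]. split; [lra|]. refine (conj _ (conj _ (conj _ _))).
  - apply seg_cont with (L := D); auto; lra.
  - transitivity (k 0); [f_equal; lra|exact K0].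
  - transitivity (k D); [f_equal; lra|exact K1].
  - intros t Ht. assert (Hr : 0 <= 0 + t * (D - 0) <= D) by nra.
    destruct (Ki _ Hr) as [E1 E2]. fold D in E1, E2.
    pose proof (dtri d Hm x0 (k (0 + t * (D - 0))) x).
    pose proof (dtri d Hm x0 (k (0 + t * (D - 0))) y).
    pose proof (dsym d Hm x (k (0 + t * (D - 0)))).
    lra.
Qed.

Lemma HL (a b c : X) g1 g2 g3 :
  is_geodesic d g1 a b -> is_geodesic d g2 b c -> is_geodesic d g3 c a ->
  forall e, 0 < e -> exists t, 0 <= t <= d a b /\
    2 * d c (g1 t) <= d c a + d c b - d a b + 4 * delta + 3 * e.
Proof.
  intros H1 H2 H3 e He.
  pose proof (geod_iso _ _ _ H1) as I1. pose proof (geod_iso _ _ _ H2) as I2.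
  pose proof (geod_iso _ _ _ H3) as I3.
  destruct H1 as [A0 [A1 A2]]. destruct H2 as [B0 [B1 B2]]. destruct H3 as [C0 [C1 C2]].
  pose proof (dpos d Hm a b).
  set (S := fun t => 0 <= t <= (d a b) /\ exists q, on_geod d g3 c a q /\ d (g1 t) q <= delta).
  assert (Hdel : 0 <= delta).
  { destruct (hhyp a b c g1 g2 g3 (conj A0 (conj A1 A2)) (conj B0 (conj B1 B2)) (conj C0 (conj C1 C2)) a)
      as [q [_ Hq]]. exists 0. split; [lra|auto]. pose proof (dpos d Hm a q). lra. }
  assert (HS0 : S 0).
  { split; [lra|]. exists a. split.
    { exists (d c a). split; [split; [apply (dpos d Hm)|lra]|]. symmetry; auto. }
    rewrite A0, (dxx d Hm). lra. }
  assert (Hb : bound S). { exists (d a b). intros t [Ht _]. lra. }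
  destruct (completeness S Hb (ex_intro _ 0 HS0)) as [ts [Hub Hlub]].
  assert (Hts : 0 <= ts <= (d a b)). { split. apply Hub; auto. apply Hlub. intros t [Ht _]. lra. }
  destruct (classic (exists t1, S t1 /\ t1 > ts - e)) as [[t1 [[Ht1 [q1 [Hq1 Hd1]]] Ht1e]]|Hno].
  2:{ exfalso. assert (ts <= ts - e); [|lra]. apply Hlub. intros t Ht. apply Rnot_lt_le. intros Hlt.
      apply Hno. exists t. split; auto. }
  assert (Ht1ts : t1 <= ts) by (apply Hub; split; [lra|exists q1; auto]).
  set (t2 := Rmin (d a b) (ts + e / 2)).
  assert (Ht2 : t1 <= t2 <= (d a b) /\ t2 - t1 <= 3 / 2 * e).
  { unfold t2, Rmin; destruct Rle_dec; lra. }
  assert (HQ2 : exists q2, on_geod d g2 b c q2 /\ d (g1 t2) q2 <= delta).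
  { destruct (Req_dec ts (d a b)) as [Heq|Hne].
    - assert (t2 = (d a b)) by (unfold t2, Rmin; destruct Rle_dec; lra).
      rewrite H0, A1. exists b. split. exists 0. split; [split; [lra|apply (dpos d Hm)]|auto].
      rewrite (dxx d Hm). auto.
    - assert (Hgt : t2 > ts) by (unfold t2, Rmin; destruct Rle_dec; lra).
      destruct (hhyp a b c g1 g2 g3 (conj A0 (conj A1 A2)) (conj B0 (conj B1 B2)) (conj C0 (conj C1 C2)) (g1 t2))
        as [q [[Hq|Hq] Hdq]].
      + exists t2. split; [lra|auto].
      + exists q. auto.
      + exfalso. assert (t2 <= ts); [|lra]. apply Hub. split; [lra|]. exists q; auto. }
  destruct HQ2 as [q2 [[r2 [Hr2 ->]] Hd2]].
  destruct Hq1 as [r1 [Hr1 ->]].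
  destruct (I1 t1 ltac:(lra)) as [E1 E2].
  destruct (I2 r2 Hr2) as [F1 F2].
  destruct (I3 r1 Hr1) as [G1 G2].
  assert (Hmm : d (g1 t1) (g1 t2) <= 3 / 2 * e).
  { rewrite A2 by lra. unfold Rabs; destruct Rcase_abs; lra. }
  pose proof (dtri d Hm a (g3 r1) (g1 t1)). pose proof (dsym d Hm (g1 t1) (g3 r1)).
  pose proof (dtri d Hm (g1 t1) (g2 r2) b). pose proof (dtri d Hm (g1 t1) (g1 t2) (g2 r2)).
  pose proof (dtri d Hm c (g3 r1) (g1 t1)). pose proof (dtri d Hm c (g2 r2) (g1 t1)).
  pose proof (dsym d Hm c (g2 r2)). pose proof (dsym d Hm (g2 r2) (g1 t1)).
  pose proof (dsym d Hm (g2 r2) (g1 t2)). pose proof (dsym d Hm b c). pose proof (dsym d Hm (g2 r2) b).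
  pose proof (dsym d Hm a (g3 r1)). pose proof (dsym d Hm (g1 t2) (g1 t1)).
  exists t1. split; [lra|]. lra.
Qed.

End XS2.

Section XS3.
Context {X : Type} (d : X -> X -> R) (Hm : is_metric d)
  (Hg : forall x y, exists g, is_geodesic d g x y)
  (x0 : X) (Z : X -> Prop) (gam : X -> R -> X)
  (hgam : forall z, Z z -> is_geodesic d (gam z) x0 z)
  (delta Delta : R) (hhyp : hyperbolic d delta) (hbot : bottleneck d Delta).

Let gh := gam_h d Hm x0 Z gam hgam.
Let giso := gam_iso d x0 Z gam hgam.

Lemma lb u z z' : Z z -> Z z' -> rel d x0 gam u z z' ->
  d (gam z u) (gam z' u) <= 2 * Delta + 4 * delta.
Proof.
  intros Hz Hz' [H0 [s [s' [P [H1 [H2 [H3 [H4 [H5 H6]]]]]]]]].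
  destruct (seg_gam d Hm x0 Z gam hgam z u s Hz ltac:(lra) ltac:(lra)) as [S1c S1h].
  destruct (seg_gam d Hm x0 Z gam hgam z' s' u Hz' ltac:(lra) ltac:(lra)) as [S2c S2h].
  set (S1 := fun t => gam z (u + t * (s - u))) in *.
  set (S2 := fun t => gam z' (s' + t * (u - s'))) in *.
  set (Rp := concat (concat S1 P) S2).
  assert (Rc : path_continuous d Rp).
  { apply concat_cont; [apply concat_cont; auto| auto|].
    - rewrite H4. unfold S1. f_equal. lra.
    - rewrite concat_1, H5. unfold S2. f_equal. lra. }
  assert (R0 : Rp 0 = gam z u). { unfold Rp. rewrite !concat_0. unfold S1. f_equal. lra. }
  assert (R1 : Rp 1 = gam z' u). { unfold Rp. rewrite concat_1. unfold S2. f_equal. lra. }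
  assert (Rb : forall t, 0 <= t <= 1 -> u <= d x0 (Rp t)).
  { apply (concat_all (fun x => u <= d x0 x)); [apply (concat_all (fun x => u <= d x0 x))|]; auto.
    - intros t Ht. specialize (S1h t Ht). unfold S1. unfold Rmin in S1h; destruct Rle_dec; lra.
    - intros t Ht. specialize (S2h t Ht). unfold S2. unfold Rmin in S2h; destruct Rle_dec; lra. }
  set (a := gam z u) in *. set (b := gam z' u) in *.
  assert (ha : d x0 a = u) by (apply gh; auto; lra).
  assert (hb : d x0 b = u) by (apply gh; auto; lra).
  destruct (Hg a b) as [g1 Hg1].
  assert (Hg2 : is_geodesic d (fun t => gam z' (u - t)) b x0).
  { unfold is_geodesic. rewrite (dsym d Hm b x0), hb. split; [|split].
    - unfold b. f_equal. lra.
    - replace (u - u) with 0 by lra. apply (gam_0 d x0 Z gam hgam); auto.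
    - intros s1 t1 Hs1 Ht1. rewrite giso; [|auto|split; lra|split; lra].
      replace (u - s1 - (u - t1)) with (-(s1 - t1)) by ring. rewrite Rabs_Ropp. auto. }
  assert (Hg3 : is_geodesic d (gam z) x0 a).
  { unfold is_geodesic. rewrite ha. split; [|split].
    - apply (gam_0 d x0 Z gam hgam); auto.
    - auto.
    - intros s1 t1 Hs1 Ht1. apply giso; [auto|split; lra|split; lra]. }
  assert (Hall : forall e, 0 < e -> d a b <= 2 * Delta + 4 * delta + 3 * e).
  { intros e He.
    destruct (HL d Hm delta hhyp a b x0 g1 _ _ Hg1 Hg2 Hg3 e He) as [t [Ht Hd]].
    destruct hbot as [_ Hbot].
    destruct (Hbot a b g1 Hg1 (g1 t) (ex_intro _ t (conj Ht eq_refl)) Rp Rc R0 R1) as [tau [Htau Hdt]].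
    specialize (Rb tau Htau).
    pose proof (dtri d Hm x0 (g1 t) (Rp tau)). pose proof (dsym d Hm (g1 t) (Rp tau)).
    lra. }
  apply Rnot_lt_le. intros Hlt.
  specialize (Hall ((d a b - (2 * Delta + 4 * delta)) / 6) ltac:(lra)). lra.
Qed.

Lemma delta_nn : 0 <= delta.
Proof.
  assert (Hc : is_geodesic d (fun _ => x0) x0 x0).
  { split; [auto|split; [auto|]]. intros s t Hs Ht. rewrite (dxx d Hm) in *.
    replace s with 0 by lra. replace t with 0 by lra. rewrite Rminus_0_r, Rabs_R0. reflexivity. }
  destruct (hhyp x0 x0 x0 _ _ _ Hc Hc Hc x0) as [q [_ Hq]].
  - exists 0. rewrite (dxx d Hm). split; [lra|auto].
  - pose proof (dpos d Hm x0 q). lra.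
Qed.

End XS3.

Section XS4.
Context {X : Type} (d : X -> X -> R) (Hm : is_metric d)
  (x0 : X) (Z : X -> Prop) (gam : X -> R -> X)
  (hgam : forall z, Z z -> is_geodesic d (gam z) x0 z).

Definition ZIX (o : option X) : Prop := match o with None => True | Some z => Z z end.
Definition LIX (o : option X) : R := match o with None => 0 | Some z => LL d x0 z end.
Definition cIX (o o' : option X) : R :=
  match o, o' with Some z, Some z' => cX d x0 gam z z' | _, _ => 0 end.

Definition Cd : cdata.
Proof.
  refine (CData (option X) ZIX LIX cIX None I _ _ _ _ _).
  - intros [z|] Hz; simpl in *; [apply (cX_diag d Hm x0 Z gam hgam); auto|auto].
  - intros [z|] [z'|] Hz Hz'; simpl in *; auto. apply (cX_sym d x0 Z gam); auto.
  - intros [z|] [z'|] Hz Hz'; simpl in *; try lra. apply (cX_nn d Hm x0 Z gam hgam); auto.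
  - intros [z|] [z'|] Hz Hz'; simpl in *; try lra.
    + apply (cX_le d Hm x0 Z gam hgam); auto.
    + apply (LL_nn d Hm x0).
  - intros [z|] [z'|] [z''|] Hz Hz' Hz''; simpl in *;
      try (apply (cX_ultra d Hm x0 Z gam hgam); auto);
      try (pose proof (cX_nn d Hm x0 Z gam hgam z z' Hz Hz'));
      try (pose proof (cX_nn d Hm x0 Z gam hgam z' z'' Hz' Hz''));
      try (pose proof (cX_nn d Hm x0 Z gam hgam z z'' Hz Hz''));
      unfold Rmin; repeat destruct Rle_dec; lra.
Defined.

Definition fT (x : X) : TT Cd :=
  match excluded_middle_informative (exists z, Z z /\ on_geod d (gam z) x0 z x) with
  | left H => let zz := constructive_indefinite_description _ H in
      @mk Cd (Some (proj1_sig zz)) (proj1 (proj2_sig zz)) (d x0 x)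
  | right _ => @mk Cd None I 0
  end.

Lemma fT_gam z (Hz : Z z) s : 0 <= s <= LL d x0 z -> fT (gam z s) = @mk Cd (Some z) Hz s.
Proof.
  intros Hs. unfold fT. destruct excluded_middle_informative as [H|H].
  - destruct (constructive_indefinite_description _ H) as [z1 [Hz1 [t1 [Ht1 E]]]]. simpl.
    assert (Hd : d x0 (gam z s) = s) by (apply (gam_h d Hm x0 Z gam hgam); auto).
    assert (Hd1 : d x0 (gam z1 t1) = t1) by (apply (gam_h d Hm x0 Z gam hgam); auto).
    assert (t1 = s) by congruence. subst t1. rewrite Hd.
    apply mk_eq; simpl; unfold LL in *.
    + split; lra.
    + apply (cX_ge d Hm x0 Z gam hgam); auto.
      apply (rel_pt d Hm x0 Z gam hgam); auto; try (split; lra).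
  - exfalso. apply H. exists z. split; auto. exists s. auto.
Qed.

End XS4.

Theorem proposition5p1 (X : Type) (d : X -> X -> R) (delta Delta : R)
  (hQT : quasi_tree d) (hhyp : hyperbolic d delta) (hbot : bottleneck d Delta)
  (x0 : X) (Z : X -> Prop) (gam : X -> R -> X)
  (hgam : forall z, Z z -> is_geodesic d (gam z) x0 z) :
  let Y := fun y => exists z, Z z /\ on_geod d (gam z) x0 z y in
  exists (T : Type) (dT : T -> T -> R) (f : X -> T),
    R_tree dT /\
    (forall z, Z z -> forall s t, 0 <= s <= d x0 z -> 0 <= t <= d x0 z ->
        dT (f (gam z s)) (f (gam z t)) = d (gam z s) (gam z t)) /\
    (forall x y, Y x -> Y y ->
        d x y - 2 * (Delta + 2 * delta) <= dT (f x) (f y) <= d x y).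
Proof.
  intros Y. destruct hQT as [[Hm Hg] _].
  set (C := Cd d Hm x0 Z gam hgam).
  exists (TT C), (dk (Tkit C)), (fT d Hm x0 Z gam hgam).
  split; [apply kit_Rtree|]. split.
  - intros z Hz s t Hs Ht.
    rewrite (fT_gam d Hm x0 Z gam hgam z Hz s Hs), (fT_gam d Hm x0 Z gam hgam z Hz t Ht).
    rewrite dk_mk by (simpl; auto). simpl.
    rewrite (cX_diag d Hm x0 Z gam hgam z Hz).
    rewrite (gam_iso d x0 Z gam hgam z s t Hz Hs Ht).
    unfold LL in *. unfold Rmin, Rabs; repeat destruct Rle_dec; repeat destruct Rcase_abs; lra.
  - intros x y [z [Hz [s [Hs ->]]]] [z' [Hz' [s' [Hs' ->]]]].
    rewrite (fT_gam d Hm x0 Z gam hgam z Hz s Hs), (fT_gam d Hm x0 Z gam hgam z' Hz' s' Hs').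
    rewrite dk_mk by (simpl; auto). simpl.
    pose proof (ub d Hm Hg x0 Z gam hgam z z' s s' Hz Hz' Hs Hs') as Hub.
    assert (hx : d x0 (gam z s) = s) by (apply (gam_h d Hm x0 Z gam hgam); auto).
    assert (hy : d x0 (gam z' s') = s') by (apply (gam_h d Hm x0 Z gam hgam); auto).
    pose proof (dtri d Hm (gam z s) x0 (gam z' s')).
    pose proof (dtri d Hm x0 (gam z s) (gam z' s')).
    pose proof (dtri d Hm x0 (gam z' s') (gam z s)).
    pose proof (dsym d Hm (gam z s) x0). pose proof (dsym d Hm (gam z s) (gam z' s')).
    pose proof (delta_nn d Hm x0 delta hhyp) as Hdn.
    pose proof hbot as [HD _].
    assert (Hc0 : 0 <= (cX d x0 gam z z')) by (apply (cX_nn d Hm x0 Z gam hgam); auto).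
    assert (Hlow : forall u, 0 <= u < Rmin (Rmin s s') (cX d x0 gam z z') ->
      d (gam z s) (gam z' s') <= s + s' - 2 * u + 2 * (Delta + 2 * delta)).
    { intros u Hu.
      pose proof (Rmin_l (Rmin s s') (cX d x0 gam z z')). pose proof (Rmin_r (Rmin s s') (cX d x0 gam z z')).
      pose proof (Rmin_l s s'). pose proof (Rmin_r s s').
      assert (Hr : rel d x0 gam u z z') by (apply (rel_of_lt d Hm x0 Z gam hgam); [auto|auto|split; lra]).
      pose proof (lb d Hm Hg x0 Z gam hgam delta Delta hhyp hbot u z z' Hz Hz' Hr) as Hl.
      pose proof (dtri d Hm (gam z s) (gam z u) (gam z' s')) as T1.
      pose proof (dtri d Hm (gam z u) (gam z' u) (gam z' s')) as T2.
      unfold LL in *.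
      rewrite (gam_iso d x0 Z gam hgam z s u Hz Hs ltac:(unfold LL; split; lra)) in T1.
      rewrite (gam_iso d x0 Z gam hgam z' u s' Hz' ltac:(unfold LL; split; lra) Hs') in T2.
      unfold Rabs in *; repeat destruct Rcase_abs; lra. }
    unfold LL in *.
    split.
    + apply Rnot_lt_le. intros Hlt.
      pose proof (Rmin_l (Rmin s s') (cX d x0 gam z z')). pose proof (Rmin_r (Rmin s s') (cX d x0 gam z z')).
      pose proof (Rmin_l s s'). pose proof (Rmin_r s s').
      set (v := Rmin (Rmin s s') (cX d x0 gam z z')) in *.
      assert (Hv : 0 <= v) by (unfold v, Rmin; repeat destruct Rle_dec; lra).
      set (e := d (gam z s) (gam z' s') - 2 * (Delta + 2 * delta) - (s + s' - 2 * v)).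
      destruct (Rle_dec (v - e / 4) 0).
      * assert (v = 0 \/ v > 0) as [Hv0|Hv0] by lra.
        -- lra.
        -- specialize (Hlow 0 ltac:(lra)). unfold e in *. lra.
      * specialize (Hlow (v - e / 4) ltac:(unfold e in *; lra)). unfold e in *. lra.
    + unfold Rmin; repeat destruct Rle_dec; lra.
Qed.
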